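(* There are continuum many pairwise-incomparable (with respect to inclusion) modal clones with respect to $\mathbf{K}$. Consequently, not every modal clone with respect to $\mathbf{K}$ is finitely generated.
   Context: Modal formulas: $\phi::=x\mid\neg\phi\mid\phi\land\psi\mid\phi\lor\psi\mid\Diamond\phi\mid\Box\phi$ over a countably infinite set of variables. $\mathbf{K}$ is the minimal normal modal logic. The Lindenbaum–Tarski algebra of $\mathbf{K}$ has universe $A_{\mathbf{K}}=\{[\phi]\mid\phi \text{ a modal formula}\}$ where $[\phi]$ is the class of formulas $\psi$ with $\mathbf{K}\vdash\phi\leftrightarrow\psi$, with operations $\land,\lor,\neg,\top,\bot,\Diamond$ induced by the connectives. A clone over a set $A$ is a set of finitary operations $A^n\to A$ ($n\ge1$) containing all projections and closed under composition; the clone generated by a set of operations is the smallest clone containing it (constants being treated as constant unary operations). A modal clone with respect to $\mathbf{K}$ is any clone over $A_{\mathbf{K}}$ contained in the clone generated by the operations of the Lindenbaum–Tarski algebra of $\mathbf{K}$. A clone is finitely generated if it is the clone generated by a finite set of operations. *)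

(* Defs.v *)
From Stdlib Require Import ClassicalEpsilon List.
From mathcomp Require Import all_boot.

Unset Strict Implicit.
Unset Printing Implicit Defensive.

Inductive form : Type :=
  | Var of nat
  | Neg of form
  | And of form & form
  | Or of form & form
  | Dia of form
  | Box of form.

Definition Imp (p q : form) : form := Or (Neg p) q.
Definition Iff (p q : form) : form := And (Imp p q) (Imp q p).

(* A (propositional) tautology: true under every boolean valuation of
   all formulas that respects the boolean connectives (modal formulas and
   variables being treated as atoms). *)
Definition boolhom (v : form -> bool) : Prop :=
  forall p q, v (Neg p) = ~~ v p /\ v (And p q) = v p && v q
              /\ v (Or p q) = v p || v q.
Definition tautology (p : form) : Prop :=
  forall v, boolhom v -> v p = true.

Inductive Kprov : form -> Prop :=
  | K_taut p : tautology p -> Kprov p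
  | K_axK p q : Kprov (Imp (Box (Imp p q)) (Imp (Box p) (Box q)))
  | K_dual p : Kprov (Iff (Dia p) (Neg (Box (Neg p))))
  | K_mp p q : Kprov (Imp p q) -> Kprov p -> Kprov q
  | K_nec p : Kprov p -> Kprov (Box p).

Definition cls (p : form) : form -> Prop := fun q => Kprov (Iff p q).
Definition AK : Type := {P : form -> Prop | exists p, P = cls p}.
Definition mkAK (p : form) : AK := exist _ (cls p) (ex_intro _ p erefl).
Definition rep (X : AK) : form :=
  proj1_sig (constructive_indefinite_description _ (proj2_sig X)).

(* an operation of arity n.+1 (arities are >= 1) *)
Definition op (A : Type) (n : nat) : Type := ('I_n.+1 -> A) -> A.
Definition opset (A : Type) : Type := forall n, op A n -> Prop.

Definition is_clone {A : Type} (C : opset A) : Prop :=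
  (forall n (i : 'I_n.+1), C n (fun x => x i)) /\
  (forall n m (f : op A n) (g : 'I_n.+1 -> op A m),
      C n f -> (forall i, C m (g i)) -> C m (fun x => f (fun i => g i x))).

Definition subops {A : Type} (C D : opset A) : Prop :=
  forall n f, C n f -> D n f.

Definition gen {A : Type} (S : opset A) : opset A :=
  fun n f => forall C : opset A, is_clone C -> subops S C -> C n f.

Definition set_of_list {A : Type} (l : list {n : nat & op A n}) : opset A :=
  fun n f => In (existT (fun k => op A k) n f) l.

Definition finitely_generated {A : Type} (C : opset A) : Prop :=
  exists l : list {m : nat & op A m}, forall k g, C k g <-> gen (set_of_list l) k g.

Definition negK : op AK 0 := fun x => mkAK (Neg (rep (x ord0))).
Definition diaK : op AK 0 := fun x => mkAK (Dia (rep (x ord0))).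
Definition andK : op AK 1 :=
  fun x => mkAK (And (rep (x ord0)) (rep (x ord_max))).
Definition orK : op AK 1 :=
  fun x => mkAK (Or (rep (x ord0)) (rep (x ord_max))).
(* constants as constant unary operations: top = [x0 \/ ~x0], bot = [x0 /\ ~x0] *)
Definition topK : op AK 0 := fun _ => mkAK (Or (Var 0) (Neg (Var 0))).
Definition botK : op AK 0 := fun _ => mkAK (And (Var 0) (Neg (Var 0))).

Definition LT_ops : list {n : nat & op AK n} :=
  [:: existT (fun k => op AK k) 1 andK; existT (fun k => op AK k) 1 orK;
      existT (fun k => op AK k) 0 negK; existT (fun k => op AK k) 0 topK;
      existT (fun k => op AK k) 0 botK; existT (fun k => op AK k) 0 diaK].

Definition modal_clone (C : opset AK) : Prop :=
  is_clone C /\ subops C (gen (set_of_list LT_ops)).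

(* Main.v *)
Require Import Defs.
From Stdlib Require Import ClassicalEpsilon List.
From Stdlib Require Import Classical Lia FunctionalExtensionality.
From mathcomp Require Import all_boot.
From mathcomp Require Import zify.

Fixpoint sat (N : nat) (p : form) (w : nat) : bool :=
  match p with
  | Var _ => false
  | Neg q => ~~ sat N q w
  | And a b => sat N a w && sat N b w
  | Or a b => sat N a w || sat N b w
  | Dia q => (w < N) && sat N q w.+1
  | Box q => (w < N) ==> sat N q w.+1
  end.

Lemma sound N p : Kprov p -> forall w, sat N p w.
Proof.
elim=> {p}.
- move=> p Ht w; apply: (Ht (fun q => sat N q w)).
  by move=> a b; split; [|split].
- move=> p q w /=; case: (w < N); case: (sat N p w.+1); case: (sat N q w.+1); by [].
- move=> p w /=; case: (w < N); case: (sat N p w.+1); by [].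
- move=> p q _ IH1 _ IH2 w; have := IH1 w; rewrite /= IH2 //.
- move=> p _ IH w /=; apply/implyP=> _; exact: IH.
Qed.

Lemma sat_iff N p q w : Kprov (Iff p q) -> sat N p w = sat N q w.
Proof.
move=> H; have := @sound N _ H w => /=.
by case: (sat N p w); case: (sat N q w).
Qed.

Lemma sat_rep N p w : sat N (rep (mkAK p)) w = sat N p w.
Proof.
rewrite /rep; case: (constructive_indefinite_description _ _) => r /= Hr.
have : cls p p.
  apply: K_taut => v Hv; have [H1 [H2 H3]] := Hv p p.
  rewrite /Iff /Imp. have [_ [-> _]] := Hv (Or (Neg p) p) (Or (Neg p) p).
  have [_ [_ ->]] := Hv (Neg p) p. rewrite H1. by case: (v p).
rewrite Hr => Hc; exact: sat_iff Hc.
Qed.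

Definition Phi N (a : AK) w := sat N (rep a) w.

Lemma Phi_neg N x w : Phi N (negK x) w = ~~ Phi N (x ord0) w.
Proof. by rewrite /Phi /negK sat_rep. Qed.
Lemma Phi_dia N x w : Phi N (diaK x) w = (w < N) && Phi N (x ord0) w.+1.
Proof. by rewrite /Phi /diaK sat_rep. Qed.
Lemma Phi_and N x w : Phi N (andK x) w = Phi N (x ord0) w && Phi N (x ord_max) w.
Proof. by rewrite /Phi /andK sat_rep. Qed.
Lemma Phi_or N x w : Phi N (orK x) w = Phi N (x ord0) w || Phi N (x ord_max) w.
Proof. by rewrite /Phi /orK sat_rep. Qed.
Lemma Phi_top N x w : Phi N (topK x) w = true.
Proof. by rewrite /Phi /topK sat_rep /=; case: (sat N (Var 0) w). Qed.

Fixpoint diaN (k : nat) : op AK 0 :=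
  match k with
  | 0 => topK
  | k'.+1 => fun x => diaK (fun i : 'I_1 => diaN k' x)
  end.

Definition negdia (m : nat) : op AK 0 := fun x => negK (fun i : 'I_1 => diaN m.+1 x).
Definition Hc (m : nat) (i : 'I_2) : op AK 0 := if i == ord0 then diaN m else negdia m.
Definition cop (m : nat) : op AK 0 := fun x => andK (fun i => Hc m i x).
Definition Hg (m : nat) (i : 'I_2) : op AK 0 := if i == ord0 then (fun x => x ord0) else cop m.
Definition g (m : nat) : op AK 0 := fun x => orK (fun i => Hg m i x).

Lemma Phi_diaN N k x w : w <= N -> Phi N (diaN k x) w = (w + k <= N).
Proof.
elim: k w => [|k IH] w Hw /=; first by rewrite Phi_top addn0 Hw.
rewrite Phi_dia; case: ltnP => Hl /=.
- by rewrite IH // addSnnS.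
- apply/esym/negbTE; rewrite -ltnNge; lia.
Qed.

Lemma Phi_cop N m x : Phi N (cop m x) 0 = (m == N).
Proof.
rewrite /cop Phi_and /Hc /= /negdia Phi_neg !Phi_diaN //=.
case: ltngtP => H; lia.
Qed.

Lemma Phi_g N m x : Phi N (g m x) 0 = Phi N (x ord0) 0 || (m == N).
Proof. by rewrite /g Phi_or /Hg /= Phi_cop. Qed.

Definition P (N : nat) : opset AK := fun k f =>
  forall x : 'I_k.+1 -> AK, (forall i, Phi N (x i) 0 = false) -> Phi N (f x) 0 = false.

Lemma P_clone N : is_clone (P N).
Proof.
split.
- by move=> n i x Hx; apply: Hx.
- move=> n m f h Hf Hh x Hx; apply: Hf => i; exact: Hh.
Qed.

Lemma g_P N m : m <> N -> P N 0 (g m).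
Proof.
move=> H x Hx; rewrite Phi_g Hx /=; apply/eqP; exact: H.
Qed.

Lemma g_notP N : ~ P N 0 (g N).
Proof.
move=> H; have := H (fun _ => mkAK (Var 0)).
rewrite Phi_g eqxx orbT => Hx; suff : true = false by [].
apply: Hx => i; by rewrite /Phi sat_rep.
Qed.

Lemma gen_clone {A} (S : opset A) : is_clone (gen S).
Proof.
split.
- move=> n i C [HC _] _; exact: HC.
- move=> n m f h Hf Hh C HC HS; apply: (proj2 HC) => [|i]; [exact: Hf | exact: Hh].
Qed.

Lemma gen_min {A} (S D : opset A) : is_clone D -> subops S D -> subops (gen S) D.
Proof. move=> HD HS n f Hf; exact: Hf. Qed.

Lemma gen_incl {A} (S : opset A) : subops S (gen S).
Proof. move=> n f Hf C _ HS; exact: HS. Qed.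

Lemma g_LT m : gen (set_of_list LT_ops) 0 (g m).
Proof.
move=> C HC HS.
have Hor : C 1 orK by apply: HS; rewrite /set_of_list /=; tauto.
have Hand : C 1 andK by apply: HS; rewrite /set_of_list /=; tauto.
have Hneg : C 0 negK by apply: HS; rewrite /set_of_list /=; tauto.
have Htop : C 0 topK by apply: HS; rewrite /set_of_list /=; tauto.
have Hdia : C 0 diaK by apply: HS; rewrite /set_of_list /=; tauto.
have HdN : forall k, C 0 (diaN k).
  elim=> [|k IH] //=; exact: (proj2 HC 0 0 diaK (fun _ => diaN k)).
apply: (proj2 HC 1 0 orK (Hg m)) => // i; rewrite /Hg; case: eqP => _.
  exact: (proj1 HC 0 ord0).
apply: (proj2 HC 1 0 andK (Hc m)) => // j; rewrite /Hc; case: eqP => _ //.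
exact: (proj2 HC 0 0 negK (fun _ => diaN m.+1)).
Qed.

Definition Sof (s : nat -> bool) : opset AK := fun k =>
  match k with 0 => fun f => exists j, f = g (2 * j + s j) | _ => fun _ => False end.
Definition Sall : opset AK := fun k =>
  match k with 0 => fun f => exists j, f = g j | _ => fun _ => False end.

Lemma modal_gen (S : opset AK) :
  (forall f, S 0 f -> exists j, f = g j) -> (forall k f, k <> 0 -> ~ S k f) ->
  modal_clone (gen S).
Proof.
move=> H0 H1; split; first exact: gen_clone.
apply: gen_min; first exact: gen_clone.
case=> [|k] f Hf; last by case: (H1 k.+1 f).
by case: (H0 f Hf) => j ->; apply: g_LT.
Qed.

Definition Good : opset AK := fun k f => exists M, forall n, M <= n -> P n k f.

Lemma Good_clone : is_clone Good.
Proof.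
split.
- move=> n i; exists 0 => N _; exact: (proj1 (P_clone N)).
- move=> n m f h [M0 HM0] Hh.
  pose Mf i := proj1_sig (constructive_indefinite_description _ (Hh i)).
  have HMf : forall i N, Mf i <= N -> P N m (h i).
    move=> i; rewrite /Mf; case: (constructive_indefinite_description _ _) => //.
  exists (maxn M0 (\max_(i < n.+1) Mf i)) => N HN.
  apply: (proj2 (P_clone N)).
    apply: HM0; apply: leq_trans HN; exact: leq_maxl.
  move=> i; apply: HMf; apply: leq_trans HN; apply: leq_trans (leq_maxr _ _).
  exact: (leq_bigmax i).
Qed.



Lemma list_bound (l : list {m : nat & op AK m}) :
  (forall x, In x l -> Good (projT1 x) (projT2 x)) ->
  exists M, forall x, In x l -> forall n, M <= n -> P n (projT1 x) (projT2 x).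
Proof.
elim: l => [|a l IH] H; first by exists 0.
case: IH => [x Hx|M HM]; first by apply: H; right.
case: (H a (or_introl erefl)) => M0 HM0.
exists (maxn M M0) => x [<-|Hx] n Hn.
- apply: HM0; apply: leq_trans Hn; exact: leq_maxr.
- apply: (HM x Hx n); apply: leq_trans Hn; exact: leq_maxl.
Qed.

Theorem fact4p6 :
  (exists F : (nat -> bool) -> opset AK,
      (forall s, modal_clone (F s)) /\
      (forall s t, s <> t -> ~ subops (F s) (F t))) /\
  (exists C : opset AK, modal_clone C /\ ~ finitely_generated C).
Proof.
split.
- exists (fun s => gen (Sof s)); split.
  + move=> s; apply: modal_gen.
    * move=> f [j ->]; by exists (2 * j + s j).
    * by case=> [|k] f H; [case: H | move=> []].
  + move=> s t Hst Hsub.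
    have [j Hj] : exists j, s j <> t j.
      apply: NNPP => Hn; apply: Hst; apply: functional_extensionality => j.
      apply: NNPP => Hj; apply: Hn; by exists j.
    have Hin : gen (Sof s) 0 (g (2 * j + s j)) by apply: gen_incl; exists j.
    have := Hsub _ _ Hin.
    have : subops (gen (Sof t)) (P (2 * j + s j)).
      apply: gen_min; first exact: P_clone.
      case=> [|k] f //= [i ->]; apply: g_P => E.
      have [Eij|Nij] := eqVneq i j.
        subst i; apply: Hj; move: E; case: (s j); case: (t j) => //=; lia.
      move/eqP: Nij; move: E; case: (s j); case: (t i) => /=; lia.
    move=> H1 H2; exact: g_notP (H1 _ _ H2).
- exists (gen Sall); split.
  + apply: modal_gen; [by move=> f [j ->]; exists j | by case=> [|k] f H; [case: H | move=> []]].
  + case=> l Hl.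
    have HG : subops (gen Sall) Good.
      apply: gen_min; first exact: Good_clone.
      case=> [|k] f //= [j ->]; exists j.+1 => n Hn; apply: g_P; lia.
    have [M HM] : exists M, forall x, In x l -> forall n, M <= n -> P n (projT1 x) (projT2 x).
      apply: list_bound => -[k f] Hx /=; apply: HG; apply/Hl.
      by apply: gen_incl.
    have Hsub : subops (gen (set_of_list l)) (P M).
      apply: gen_min; first exact: P_clone.
      move=> k f Hf; exact: (HM _ Hf M (leqnn M)).
    apply: (g_notP M); apply: Hsub; apply/Hl; apply: gen_incl; by exists M.
Qed.
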